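(* For every positive integer $n$ there exists an instance of the myopic best-response dynamics described below (a graph with nonnegative embedding weights, features, a linear threshold classifier, and a scaled 2-norm cost) in which exactly one user moves in the first round and this single move triggers a cascade so that in each of the rounds $1,2,\dots,n$ some user moves.
   Context: Users $i$ have features $x_i\in\mathbb{R}^\ell$; embeddings $\phi(x_i;x_{-i})=\widetilde{w}_{ii}x_i+\sum_{j\neq i}\widetilde{w}_{ji}x_j$ with $\widetilde{w}_{ji}\ge0$ (user $j$ influences user $i$ iff $\widetilde{w}_{ji}>0$). Classifier: $h_{\theta,b}(x_i;x_{-i})=\mathrm{sign}(\theta^\top\phi(x_i;x_{-i})+b)$, $\mathrm{sign}(0)=+1$. Cost $c_\beta(x,x')=\beta\|x-x'\|_2$ for some $\beta>0$, so users move at most distance $2/\beta$. Dynamics: $x_i^{(0)}=x_i$; at each round $t\ge1$ all users update concurrently; user $i$ changes her features only if she is currently classified $-1$ and some $x'$ with $h(x';x^{(t-1)}_{-i})=+1$ has $c_\beta(x_i^{(t-1)},x')\le2$, in which case she moves to the minimum-cost such point (embedding exactly on the decision boundary); otherwise she stays. User $i$ ''moves at round $t$'' if $x_i^{(t)}\neq x_i^{(t-1)}$. *)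

(* Defs.v *)
From HB Require Import structures.
From mathcomp Require Import all_boot all_order all_algebra.
From mathcomp Require Import reals.
Set Implicit Arguments. Unset Strict Implicit. Unset Printing Implicit Defensive.
Import Order.TTheory GRing.Theory Num.Theory.
Local Open Scope ring_scope.

Section Dyn.
Variables (R : realType) (m l : nat).

(* Features of all users: X i : 'rV_l.  Weights: W j i = w~_{ji} (j influences i). *)
Definition features := 'I_m -> 'rV[R]_l.

Definition norm2 (v : 'rV[R]_l) : R := Num.sqrt (\sum_(k < l) (v 0 k) ^+ 2).

Definition cost (beta : R) (x x' : 'rV[R]_l) : R := beta * norm2 (x - x').

Definition dotp (theta v : 'rV[R]_l) : R := \sum_(k < l) theta 0 k * v 0 k.

Definition embed (W : 'M[R]_m) (X : features) (i : 'I_m) : 'rV[R]_l :=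
  \sum_(j < m) W j i *: X j.

Definition upd (X : features) (i : 'I_m) (x' : 'rV[R]_l) : features :=
  fun j => if j == i then x' else X j.

(* h = +1 iff theta^T phi + b >= 0  (sign(0) = +1) *)
Definition positive (W : 'M[R]_m) (theta : 'rV[R]_l) (b : R)
  (X : features) (i : 'I_m) : Prop :=
  0 <= dotp theta (embed W X i) + b.

Definition step (W : 'M[R]_m) (theta : 'rV[R]_l) (b beta : R)
  (X Y : features) : Prop :=
  forall i : 'I_m,
    let feas := fun x' => positive W theta b (upd X i x') i in
    let can_move := ~ positive W theta b X i /\
                    (exists x', feas x' /\ cost beta (X i) x' <= 2) in
    (can_move -> feas (Y i) /\
         (forall x', feas x' -> cost beta (X i) (Y i) <= cost beta (X i) x')) /\
    (~ can_move -> Y i = X i).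

Definition dynamics (W : 'M[R]_m) (theta : 'rV[R]_l) (b beta : R)
  (X0 : features) (traj : nat -> features) : Prop :=
  traj 0%N = X0 /\ forall t, step W theta b beta (traj t) (traj t.+1).

(* user i moves at round t >= 1 *)
Definition moves (traj : nat -> features) (t : nat) (i : 'I_m) : Prop :=
  traj t i <> traj t.-1 i.

End Dyn.

(* Main.v *)
Require Import Defs.
From HB Require Import structures.
From mathcomp Require Import all_boot all_order all_algebra.
From mathcomp Require Import reals.
From mathcomp Require Import zify ring lra.
From Stdlib Require Import FunctionalExtensionality.
Import Order.TTheory GRing.Theory Num.Theory.
Local Open Scope ring_scope.

Section Constr.
Variables (R : realType) (n : nat).

Definition Wm : 'M[R]_n :=
  \matrix_(j, i) ((j == i)%:R + 2 * ((j : nat).+1 == i)%:R).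
Definition th : 'rV[R]_1 := const_mx 1.
Definition st (t : nat) : features R n 1 :=
  fun k => const_mx (if ((k : nat) < t)%N then 0 else -1).
Definition Q (X : features R n 1) (i : 'I_n) : R :=
  \sum_(j < n) (((j : nat).+1 == i)%:R * X j 0 0).

Lemma mx11 (A B : 'rV[R]_1) : A 0 0 = B 0 0 -> A = B.
Proof. by move=> h; apply/matrixP => a c; rewrite !ord1. Qed.

Lemma stE t k : st t k 0 0 = if ((k : nat) < t)%N then 0 else -1.
Proof. by rewrite /st mxE. Qed.

Lemma embE (X : features R n 1) i :
  dotp th (embed Wm X i) + 0 = X i 0 0 + 2 * Q X i.
Proof.
rewrite addr0 /dotp big_ord1 /th mxE mul1r /embed summxE.
under eq_bigr => j _ do rewrite mxE [Wm j i]mxE mulrDl.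
rewrite big_split /= (bigD1 i) //= eqxx mul1r big1 ?addr0; last first.
  by move=> j /negPf ->; rewrite mul0r.
by rewrite /Q mulr_sumr; congr (_ + _); apply: eq_bigr => j _; rewrite mulrA.
Qed.

Lemma costE (x x' : 'rV[R]_1) : cost 1 x x' = `|x 0 0 - x' 0 0|.
Proof.
by rewrite /cost mul1r /norm2 big_ord1 !mxE sqrtr_sqr.
Qed.

Lemma Qupd X i x' : Q (upd X i x') i = Q X i.
Proof.
apply: eq_bigr => j _; rewrite /upd.
case: (eqVneq j i) => [->|] //.
by rewrite eqn_leq ltnn !mul0r.
Qed.

Lemma updE (X : features R n 1) i x' : upd X i x' i = x'.
Proof. by rewrite /upd eqxx. Qed.

Lemma Q_st t (i : 'I_n) :
  Q (st t) i = if ((i : nat) <= t)%N then 0 else -1.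
Proof.
case: (posnP i) => [i0|ip].
  rewrite i0 leq0n /Q big1 // => j _; by rewrite i0 mul0r.
have pn : (i.-1 < n)%N by apply: leq_ltn_trans (leq_pred i) (ltn_ord i).
rewrite /Q (bigD1 (Ordinal pn)) //= big1 ?addr0; last first.
  move=> j /eqP hj; case: eqP => [h|]; last by rewrite mul0r.
  by exfalso; apply: hj; apply: val_inj => /=; by rewrite -h.
have -> : (i.-1.+1 == i) by apply/eqP; lia.
rewrite mul1r stE.
case: ifP => h1; case: ifP => h2 //; exfalso; move: h1 h2 ip => /=; lia.
Qed.


Lemma posE X i : positive Wm th 0 X i <-> 0 <= X i 0 0 + 2 * Q X i.
Proof. by rewrite /positive embE. Qed.

Lemma feasE X i x' : positive Wm th 0 (upd X i x') i <-> 0 <= x' 0 0 + 2 * Q X i.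
Proof. by rewrite /positive embE updE Qupd. Qed.

Lemma sq_st t (i : 'I_n) :
  [/\ ((i : nat) < t)%N -> st t i 0 0 = 0 /\ Q (st t) i = 0,
      ((i : nat) = t) -> st t i 0 0 = -1 /\ Q (st t) i = 0 &
      (t < (i : nat))%N -> st t i 0 0 = -1 /\ Q (st t) i = -1].
Proof.
rewrite stE Q_st; split => h.
- by rewrite h ifT //; apply: ltnW.
- by rewrite h ltnn leqnn.
- by rewrite ifF ?ifF //; apply/negbTE; rewrite -ltnNge // ltnW.
Qed.

Definition CM (X : features R n 1) i := ~ positive Wm th 0 X i /\
  exists x', positive Wm th 0 (upd X i x') i /\ cost 1 (X i) x' <= 2.

Lemma CM_st t i : CM (st t) i <-> (i : nat) = t.
Proof.
have [A B C] := sq_st t i.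
rewrite /CM; split.
- move=> [np [x' [f c]]]; move: np f c; rewrite posE feasE costE.
  case: (ltngtP i t) => // h; [have [-> ->] := A h | have [-> ->] := C h].
    by move=> np; exfalso; apply: np; lra.
  move=> _ f; rewrite ler_norml => /andP [c1 c2]; exfalso; lra.
- move=> h; have [s q] := B h; split.
    by rewrite posE s q; lra.
  exists (const_mx 0); rewrite feasE costE q s mxE; split; first lra.
  by rewrite subr0 normrN normr1; lra.
Qed.

Lemma st_same t (i : 'I_n) : (i : nat) <> t -> st t.+1 i = st t i.
Proof.
move=> h; apply: mx11; rewrite !stE ltnS leq_eqVlt.
by have -> : ((i : nat) == t) = false by apply/eqP.
Qed.

Lemma st_new t (i : 'I_n) : (i : nat) = t -> st t.+1 i 0 0 = 0.
Proof. by move=> h; rewrite stE h ltnSn. Qed.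

Lemma step_ok t : step Wm th 0 1 (st t) (st t.+1).
Proof.
move=> i /=; have := CM_st t i; rewrite /CM => cm; split.
- move=> /cm h; have [_ B _] := sq_st t i; have [s q] := B h.
  rewrite feasE st_new // q; split; first lra.
  move=> x'; rewrite feasE q costE s st_new // => f.
  rewrite costE subr0 normrN normr1 ler_normr; apply/orP; right; lra.
- by move=> ncm; apply: st_same => h; apply: ncm; apply/cm.
Qed.

Lemma step_char t Y : step Wm th 0 1 (st t) Y -> forall i, Y i = st t.+1 i.
Proof.
move=> hs i; have := hs i => /= -[h1 h2].
have := CM_st t i; rewrite /CM => cm.
case: (eqVneq (i : nat) t) => h.
- have [f mn] := h1 (proj2 cm h).
  have [_ B _] := sq_st t i; have [s q] := B h.
  move: f; rewrite feasE q => f.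
  have := mn (const_mx 0); rewrite feasE q mxE costE s => /(_ ltac:(lra)).
  rewrite costE mxE ?s ?mxE h ltnn subr0 normrN normr1 ler_norml => /andP [c1 c2].
  apply: mx11; rewrite st_new //; lra.
- rewrite st_same; last by apply/eqP.
  by apply: h2 => /cm; apply/eqP.
Qed.

End Constr.

Theorem proposition3 (R : realType) (n : nat) : (0 < n)%N ->
  exists (m l : nat) (W : 'M[R]_m) (X0 : 'I_m -> 'rV[R]_l)
         (theta : 'rV[R]_l) (b beta : R),
    0 < beta /\
    (forall j i : 'I_m, 0 <= W j i) /\
    (exists traj, dynamics W theta b beta X0 traj) /\
    (forall traj, dynamics W theta b beta X0 traj ->
       (exists i, moves traj 1 i /\ forall j, moves traj 1 j -> j = i) /\
       (forall t, (1 <= t <= n)%N -> exists i, moves traj t i)).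
Proof.
move=> n0.
exists n, 1%N, (Wm R n), (st R n 0), (th R), 0, 1.
split; first exact: ltr01.
split.
  by move=> j i; rewrite mxE; apply: addr_ge0; [|apply: mulr_ge0]; rewrite ?ler0n.
split.
  by exists (st R n); split => // t; apply: step_ok.
move=> traj [h0 hs].
have E : forall t, traj t = st R n t.
  elim=> [|t IH] //; apply: functional_extensionality => i.
  by apply: step_char; rewrite -IH; apply: hs.
have diff : forall t (i : 'I_n), moves traj t i <-> (i : nat) = t.-1 /\ (0 < t)%N.
  move=> t i; rewrite /moves !E; split.
    move=> h; case: (posnP t) => [t0|tp]; first by rewrite t0 in h.
    split => //; case: (eqVneq (i : nat) t.-1) => // hi; exfalso; apply: h.
    by rewrite -{1}(prednK tp) st_same //; apply/eqP.
  move=> [hi tp] h; have := congr1 (fun M : 'rV[R]_1 => M 0 0) h => /=.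
  rewrite !stE hi -[X in (_ < X)%N](prednK tp) ltnSn ltnn => /eqP.
  by rewrite eq_sym oppr_eq0 oner_eq0.
split.
  exists (Ordinal n0); split; first by apply/diff.
  by move=> j /diff [hj _]; apply: val_inj.
move=> t /andP [t1 tn].
have p : (t.-1 < n)%N by lia.
by exists (Ordinal p); apply/diff.
Qed.
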